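(* Let $\Lambda$ be a finite set. Let $\mathcal{A}$ be a point based function array over a semigroup $A$ indexed by $\Lambda$, and let $\mathcal{S}$ be a function array over a partial semigroup $S$ indexed by $\Lambda$. Let $(f,g)\colon\mathcal{A}\to\gamma\mathcal{S}$ be a homomorphism. Then for each finite set $F\subseteq A$, each $D\in f(\bullet)$ and each coloring of $S$ with finitely many colors, there exists a basic sequence $(x_n)$ in $\mathcal{S}$ of elements of $D$ on which the coloring is $F$-$\mathcal{A}$-tame.
   Context: Partial semigroup: partial operation with $(rs)t$ defined iff $r(st)$ defined, then equal. A function array over $S$ indexed by non-empty $\Lambda$, based on a set $X$, assigns to each $\lambda$ a partial function $\lambda$ from $X$ to $S$ such that for all $s_0,\dots,s_k\in S$ some $x\in X$ has all $s_i\lambda(x)$ defined ($\lambda\in\Lambda$). Total: $S$ a semigroup, all $\lambda$ everywhere defined. Point based: $X=\{\bullet\}$. For $\mathcal{S}$ based on $X$: $\gamma S$ = ultrafilters $\mathcal{U}$ on $S$ with $\{t:st\text{ defined}\}\in\mathcal{U}$ for all $s$, a semigroup with $B\in\mathcal{U}*\mathcal{V}$ iff $\{s:\{t: st\text{ defined},\ st\in B\}\in\mathcal{V}\}\in\mathcal{U}$; $\gamma X$ = ultrafilters $\mathcal{U}$ on $X$ with $\{x: s\lambda(x)\text{ defined}\}\in\mathcal{U}$ for all $s,\lambda$; $B\in\lambda(\mathcal{U})$ iff $\lambda^{-1}(B)\in\mathcal{U}$; $\gamma\mathcal{S}$ = total function array over $\gamma S$ indexed by $\Lambda$ based on $\gamma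 X$. A homomorphism $(f,g)$ between total function arrays indexed by $\Lambda$ (over $A$ based on $X$, resp. over $B$ based on $Y$): $f\colon X\to Y$, $g\colon A\to B$ semigroup homomorphism, $\lambda(f(x))=g(\lambda(x))$. A sequence $(x_n)$ in $X$ is basic if $\lambda_0(x_{n_0})\cdots\lambda_l(x_{n_l})$ is defined for all $n_0<\cdots<n_l$, $\lambda_i\in\Lambda$. With $\vee$ the operation of $A$, a coloring of $S$ is $F$-$\mathcal{A}$-tame on $(x_n)$ if among products $\lambda_0(x_{n_0})\cdots\lambda_l(x_{n_l})$ ($n_0<\dots<n_l$) with $\lambda_k(\bullet)\vee\cdots\vee\lambda_l(\bullet)\in F$ for each $k\le l$, the color depends only on $\lambda_0(\bullet)\vee\cdots\vee\lambda_l(\bullet)$. *)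

(* Defs.v *)
From mathcomp Require Import all_boot.
From Stdlib Require List.
Set Implicit Arguments. Unset Strict Implicit. Unset Printing Implicit Defensive.

(** Partial semigroup: mul s t = None means "st undefined".
    (rs)t defined iff r(st) defined, and then equal. *)
Definition partial_assoc (S : Type) (mul : S -> S -> option S) : Prop :=
  forall r s t : S,
    match mul r s with Some u => mul u t | None => None end =
    match mul s t with Some v => mul r v | None => None end.

Definition semigroup_assoc (A : Type) (op : A -> A -> A) : Prop :=
  forall a b c, op (op a b) c = op a (op b c).

Definition function_array (S X Lam : Type) (mul : S -> S -> option S)
  (lam : Lam -> X -> option S) : Prop :=
  forall ss : list S, ss <> nil ->
    exists x : X, forall s, List.In s ss -> forall l : Lam,
      exists y, lam l x = Some y /\ mul s y <> None.

Definition ultrafilter (T : Type) (U : (T -> Prop) -> Prop) : Prop :=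
  U (fun _ => True) /\ ~ U (fun _ => False) /\
  (forall B C : T -> Prop, U B -> (forall t, B t -> C t) -> U C) /\
  (forall B C : T -> Prop, U B -> U C -> U (fun t => B t /\ C t)) /\
  (forall B : T -> Prop, U B \/ U (fun t => ~ B t)).

Definition in_gammaS (S : Type) (mul : S -> S -> option S)
  (U : (S -> Prop) -> Prop) : Prop :=
  ultrafilter U /\ forall s, U (fun t => mul s t <> None).

Definition gamma_mul (S : Type) (mul : S -> S -> option S)
  (U V : (S -> Prop) -> Prop) : (S -> Prop) -> Prop :=
  fun B => U (fun s => V (fun t => exists u, mul s t = Some u /\ B u)).

Definition in_gammaX (S X Lam : Type) (mul : S -> S -> option S)
  (lam : Lam -> X -> option S) (U : (X -> Prop) -> Prop) : Prop :=
  ultrafilter U /\ forall (s : S) (l : Lam),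
    U (fun x => exists y, lam l x = Some y /\ mul s y <> None).

Definition gamma_lam (S X Lam : Type) (lam : Lam -> X -> option S) (l : Lam)
  (U : (X -> Prop) -> Prop) : (S -> Prop) -> Prop :=
  fun B => U (fun x => exists y, lam l x = Some y /\ B y).

(** Homomorphism (f,g) from the point based total array (A, op, pt) (pt l = l(•))
    to gamma S-array; f(•) is represented by fU. *)
Definition is_hom (S X Lam A : Type) (mul : S -> S -> option S)
  (lam : Lam -> X -> option S) (op : A -> A -> A) (pt : Lam -> A)
  (fU : (X -> Prop) -> Prop) (g : A -> (S -> Prop) -> Prop) : Prop :=
  in_gammaX mul lam fU /\
  (forall a, in_gammaS mul (g a)) /\
  (forall a b (B : S -> Prop), g (op a b) B <-> gamma_mul mul (g a) (g b) B) /\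
  (forall (l : Lam) (B : S -> Prop), gamma_lam lam l fU B <-> g (pt l) B).

(** Iterated partial product s_0 s_1 ... s_l (left to right); None if some
    factor or partial product is undefined, or if the list is empty. *)
Fixpoint oprod (S : Type) (mul : S -> S -> option S) (acc : S)
  (l : list (option S)) : option S :=
  match l with
  | nil => Some acc
  | o :: l' => match o with
               | None => None
               | Some t => match mul acc t with
                           | None => None
                           | Some u => oprod mul u l'
                           end
               end
  end.

Definition lprod (S : Type) (mul : S -> S -> option S) (l : list (option S))
  : option S :=
  match l with
  | nil => None
  | o :: l' => match o with None => None | Some s => oprod mul s l' end
  end.

Definition aprod (A : Type) (op : A -> A -> A) (l : list A) : option A :=
  match l with nil => None | a :: l' => Some (foldl op a l') end.

(** The product lam_0(x_{n_0}) ... lam_k(x_{n_k}) for terms [(n_i, lam_i)]. *)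
Definition term_prod (S X Lam : Type) (mul : S -> S -> option S)
  (lam : Lam -> X -> option S) (x : nat -> X) (t : list (nat * Lam))
  : option S :=
  lprod mul (map (fun p => lam p.2 (x p.1)) t).

Definition incr_terms (Lam : Type) (t : list (nat * Lam)) : Prop :=
  t <> nil /\ sorted ltn (map fst t).

Definition basic (S X Lam : Type) (mul : S -> S -> option S)
  (lam : Lam -> X -> option S) (x : nat -> X) : Prop :=
  forall t : list (nat * Lam), incr_terms t -> term_prod mul lam x t <> None.

Definition suffixes_in (A Lam : Type) (op : A -> A -> A) (pt : Lam -> A)
  (F : list A) (ls : list Lam) : Prop :=
  forall k, (k < size ls)%N ->
    exists a, aprod op (map pt (drop k ls)) = Some a /\ List.In a F.

Definition tame (S X Lam A C : Type) (mul : S -> S -> option S)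
  (lam : Lam -> X -> option S) (op : A -> A -> A) (pt : Lam -> A)
  (F : list A) (c : S -> C) (x : nat -> X) : Prop :=
  forall (t1 t2 : list (nat * Lam)) (s1 s2 : S),
    incr_terms t1 -> incr_terms t2 ->
    suffixes_in op pt F (map snd t1) -> suffixes_in op pt F (map snd t2) ->
    aprod op (map pt (map snd t1)) = aprod op (map pt (map snd t2)) ->
    term_prod mul lam x t1 = Some s1 -> term_prod mul lam x t2 = Some s2 ->
    c s1 = c s2.

(* Main.v *)
Require Import Defs.
From mathcomp Require Import all_boot.
From Stdlib Require Import Classical ClassicalEpsilon.
Set Implicit Arguments. Unset Strict Implicit. Unset Printing Implicit Defensive.

Lemma uf_up (T : Type) (U : (T -> Prop) -> Prop) (B C : T -> Prop) :
  ultrafilter U -> U B -> (forall t, B t -> C t) -> U C.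
Proof. by move=> [_ [_ [H _]]]; apply: H. Qed.

Lemma uf_true (T : Type) (U : (T -> Prop) -> Prop) (C : T -> Prop) :
  ultrafilter U -> (forall t, C t) -> U C.
Proof. move=> hU HC; apply: (uf_up hU (proj1 hU)) => t _; exact: HC. Qed.

Lemma uf_and (T : Type) (U : (T -> Prop) -> Prop) (B C : T -> Prop) :
  ultrafilter U -> U B -> U C -> U (fun t => B t /\ C t).
Proof. by move=> [_ [_ [_ [H _]]]]; apply: H. Qed.

Lemma uf_ne (T : Type) (U : (T -> Prop) -> Prop) (B : T -> Prop) :
  ultrafilter U -> U B -> exists t, B t.
Proof.
move=> hU HB; apply: NNPP => hn; apply: (proj1 (proj2 hU)).
apply: (uf_up hU HB) => t Bt; apply: hn; by exists t.
Qed.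

Lemma uf_imp (T : Type) (U : (T -> Prop) -> Prop) (P : Prop) (C : T -> Prop) :
  ultrafilter U -> (P -> U C) -> U (fun t => P -> C t).
Proof.
move=> hU H; case: (classic P) => hP.
  by apply: (uf_up hU (H hP)) => t Ct _.
by apply: uf_true => // t /hP.
Qed.

Lemma uf_list (T I : Type) (U : (T -> Prop) -> Prop) (l : list I)
  (P : I -> T -> Prop) :
  ultrafilter U -> (forall i, List.In i l -> U (P i)) ->
  U (fun t => forall i, List.In i l -> P i t).
Proof.
move=> hU; elim: l => [|i l IH] H.
  by apply: uf_true => // t i [].
have h1 := H i (or_introl erefl).
have h2 : U (fun t => forall j, List.In j l -> P j t).
  by apply: IH => j hj; apply: H; right.
apply: (uf_up hU (uf_and hU h1 h2)) => t [p1 p2] j [<-|hj] //; exact: p2.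
Qed.

Lemma in_mem (T : eqType) (x : T) (s : seq T) : x \in s -> List.In x s.
Proof.
elim: s => //= y s IH; rewrite inE => /orP [/eqP ->|/IH]; [left|right] => //.
Qed.

Lemma mem_in (T : eqType) (x : T) (s : seq T) : List.In x s -> x \in s.
Proof.
elim: s => //= y s IH [->|/IH h]; rewrite inE ?eqxx // h orbT //.
Qed.

Lemma uf_mem (T : Type) (I : eqType) (U : (T -> Prop) -> Prop) (l : seq I)
  (P : I -> T -> Prop) :
  ultrafilter U -> (forall i, i \in l -> U (P i)) ->
  U (fun t => forall i, i \in l -> P i t).
Proof.
move=> hU H; have := uf_list hU (l := l) (P := P) (fun i hi => H i (mem_in hi)).
by move=> h; apply: (uf_up hU h) => t Ht i /in_mem; apply: Ht.
Qed.

Lemma uf_color (T : Type) (C : finType) (U : (T -> Prop) -> Prop) (c : T -> C) :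
  ultrafilter U -> exists i, U (fun s => c s = i).
Proof.
move=> hU; apply: NNPP => hn.
have H : forall i, U (fun s => ~ c s = i).
  move=> i; case: (proj2 (proj2 (proj2 (proj2 hU))) (fun s => c s = i)) => // h.
  by case: hn; exists i.
have := uf_mem hU (l := enum C) (P := fun i s => ~ c s = i) (fun i _ => H i).
move=> h; apply: (proj1 (proj2 hU)); apply: (uf_up hU h) => t Ht.
by apply: (Ht (c t)) => //; rewrite mem_enum.
Qed.

Lemma oprod_rcons (S : Type) (mul : S -> S -> option S) acc os o :
  oprod mul acc (rcons os o) =
  match oprod mul acc os with
  | Some v => match o with Some u => mul v u | None => None end
  | None => None end.
Proof.
elim: os acc => [|o' os IH] acc /=.
  by case: o => // u; case: (mul acc u).
case: o' => // t; case: (mul acc t) => // u; exact: IH.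
Qed.

Lemma lprod_rcons (S : Type) (mul : S -> S -> option S) os o :
  os <> [::] ->
  lprod mul (rcons os o) =
  match lprod mul os with
  | Some v => match o with Some u => mul v u | None => None end
  | None => None end.
Proof.
case: os => // o' os _ /=; case: o' => // s; exact: oprod_rcons.
Qed.

Lemma foldl_assoc (A : Type) (op : A -> A -> A) : semigroup_assoc op ->
  forall r a b, foldl op (op a b) r = op a (foldl op b r).
Proof. move=> hA; elim=> //= z r IH a b; by rewrite hA IH. Qed.

Lemma sorted_rcons_lt (s : seq nat) y :
  sorted ltn (rcons s y) -> sorted ltn s /\ forall z, z \in s -> z < y.
Proof.
elim: s => [|a s IH] //= H.
have := H; rewrite (path_sortedE ltn_trans) => /andP [ha hs].
have [IH1 IH2] := IH hs; split.
  rewrite (path_sortedE ltn_trans) IH1 andbT.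
  by apply/allP => z hz; move/allP: ha; apply; rewrite mem_rcons inE hz orbT.
move=> z; rewrite inE => /orP [/eqP ->|/IH2 //].
by move/allP: ha; apply; rewrite mem_rcons inE eqxx.
Qed.
Section Main.
Variables (Lam : finType) (A : Type) (op : A -> A -> A) (op_assoc : semigroup_assoc op)
  (pt : Lam -> A) (S X : Type) (mul : S -> S -> option S) (mul_assoc : partial_assoc mul)
  (lam : Lam -> X -> option S)
  (fU : (X -> Prop) -> Prop) (g : A -> (S -> Prop) -> Prop)
  (hom : is_hom mul lam op pt fU g)
  (F : list A) (D : X -> Prop) (HD : fU D) (C : finType) (c : S -> C)
  (col : A -> C) (Hcol : forall a, g a (fun s => c s = col a)) (x0 : X).

Definition J (p : seq Lam) (a : A) := foldr (fun l acc => op (pt l) acc) a p.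
Definition good (p : seq Lam) (a : A) :=
  forall k, k <= size p -> List.In (J (drop k p) a) F.

Fixpoint enumT (n : nat) : seq (seq (nat * Lam)) :=
  match n with
  | 0 => [:: [::]]
  | n'.+1 => enumT n' ++ [seq rcons t (n', l) | t <- enumT n', l <- enum Lam]
  end.

Definition tp (h : seq X) t := term_prod mul lam (fun i => nth x0 h i) t.
Definition ext (o : option S) u := match o with None => Some u | Some s => mul s u end.
Definition T h t a := fun v => exists z, ext (tp h t) v = Some z /\ c z = col (J (map snd t) a).

Definition Inv h :=
 (forall t, t \in enumT (size h) -> t <> [::] -> tp h t <> None) /\
 (forall t a, t \in enumT (size h) -> List.In a F -> good (map snd t) a -> g a (T h t a)) /\
 (forall t0 m l, rcons t0 (m,l) \in enumT (size h) -> good (map snd t0) (pt l) ->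
    exists z, tp h (rcons t0 (m,l)) = Some z /\ c z = col (J (map snd t0) (pt l))).

Definition Good h x :=
 D x /\
 (forall t l, t \in enumT (size h) -> exists u, lam l x = Some u /\ ext (tp h t) u <> None) /\
 (forall t l, t \in enumT (size h) -> good (map snd t) (pt l) ->
    exists u z, lam l x = Some u /\ ext (tp h t) u = Some z /\ c z = col (J (map snd t) (pt l))) /\
 (forall t a b l, t \in enumT (size h) -> List.In a F -> List.In b F ->
    good (map snd t) a -> a = op (pt l) b ->
    exists u, lam l x = Some u /\ g b (fun v => exists w, mul u v = Some w /\ T h t a w)).

Lemma enumT_idx n t : t \in enumT n -> forall e, e \in t -> e.1 < n.
Proof.
elim: n t => [|n IH] t /=.
  by rewrite inE => /eqP ->.
rewrite mem_cat => /orP [/IH H e /H /ltnW //|/allpairsP [[t' l] [/= h1 _ ->]]].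
move=> e; rewrite mem_rcons inE => /orP [/eqP -> //|/(IH _ h1) /ltnW //].
Qed.

Lemma nil_enumT n : [::] \in enumT n.
Proof. elim: n => [|n IH] //=; by rewrite mem_cat IH. Qed.

Lemma enumT_complete n t : sorted ltn (map fst t) -> (forall e, e \in t -> e.1 < n) ->
  t \in enumT n.
Proof.
elim: n t => [|n IH] t.
  case: t => [|e t] //= _ H; by have := H e (mem_head _ _).
case/lastP: t => [|t [m l]] hs H; first exact: nil_enumT.
rewrite map_rcons in hs; have [hs1 hs2] := sorted_rcons_lt hs.
have hm : m < n.+1 by apply: (H (m, l)); rewrite mem_rcons mem_head.
have ht : forall e, e \in t -> e.1 < m.
  by move=> e he; apply: hs2; apply: map_f.
rewrite /= mem_cat; case: (ltngtP m n) => [hmn|hnm|hmn].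
  2: by move: hm; rewrite ltnS leqNgt hnm.
  apply/orP; left; apply: IH; first by rewrite map_rcons.
  move=> e; rewrite mem_rcons inE => /orP [/eqP -> //|/ht h]; exact: ltn_trans h hmn.
subst m; apply/orP; right; apply/allpairsP; exists (t, l) => /=; split => //.
  exact: IH.
by rewrite mem_enum.
Qed.

Lemma tp_ext h1 h2 t : (forall e, e \in t -> nth x0 h1 e.1 = nth x0 h2 e.1) -> tp h1 t = tp h2 t.
Proof.
move=> H; rewrite /tp /term_prod; congr lprod; apply/eq_in_map => e he /=.
by rewrite H.
Qed.

Lemma tp_rcons h t m l u : (t = [::] \/ tp h t <> None) -> lam l (nth x0 h m) = Some u ->
  tp h (rcons t (m, l)) = ext (tp h t) u.
Proof.
move=> Ht Hu; case: t Ht => [|e t] Ht.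
  by rewrite /tp /term_prod /= Hu.
rewrite /tp /term_prod map_rcons lprod_rcons //= Hu.
case: Ht => //; rewrite /tp /term_prod /=.
case: (lam e.2 _) => // s; by case: (oprod mul s _).
Qed.


Lemma J_rcons p l b : J (rcons p l) b = J p (op (pt l) b).
Proof. by rewrite /J foldr_rcons. Qed.

Lemma good_rcons p l b : good (rcons p l) b -> good p (op (pt l) b).
Proof.
move=> H k hk; have := H k; rewrite size_rcons drop_rcons // J_rcons; apply.
exact: leqW.
Qed.

Lemma good_in p a : good p a -> List.In a F.
Proof. by move=> H; have := H (size p) (leqnn _); rewrite drop_size. Qed.

Lemma Inv_nil : Inv [::].
Proof.
have [_ [gS _]] := hom.
split; [|split].
- by move=> t; rewrite /= inE => /eqP ->.
- move=> t a; rewrite /= inE => /eqP -> _ _.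
  apply: (uf_up (proj1 (gS a)) (Hcol a)) => v hv; by exists v.
- by move=> t0 m l; rewrite /= inE => /eqP; case: t0.
Qed.

Lemma Good_ex h : Inv h -> fU (Good h).
Proof.
have [[ufU gXs] [gS [gmul glam]]] := hom.
move=> [I1 [I2 I3]].
have hL : forall (P : Lam -> X -> Prop), (forall l, fU (P l)) -> fU (fun x => forall l, P l x).
  move=> P HP; have := uf_mem ufU (l := enum Lam) (P := P) (fun l _ => HP l).
  by move=> H; apply: (uf_up ufU H) => x Hx l; apply: Hx; rewrite mem_enum.
apply: (uf_and ufU HD); apply: uf_and => //; [|apply: uf_and => //].
- have H0 : fU (fun x => forall t, t \in enumT (size h) -> forall l, exists u, lam l x = Some u /\ ext (tp h t) u <> None).
    apply: uf_mem => // t ht; apply: hL => l.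
    case E: (tp h t) => [s|].
      by apply: (uf_up ufU (gXs s l)) => x [y [h1 h2]]; exists y.
    have := proj2 (glam l (fun _ => True)) (uf_true (proj1 (gS (pt l))) (fun _ => I)).
    by move=> H; apply: (uf_up ufU H) => x [y [h1 _]]; exists y.
  by apply: (uf_up ufU H0) => x Hx t l ht; apply: Hx.
- have H0 : fU (fun x => forall t, t \in enumT (size h) -> forall l, good (map snd t) (pt l) -> exists u z, lam l x = Some u /\
       ext (tp h t) u = Some z /\ c z = col (J (map snd t) (pt l))).
    apply: uf_mem => // t ht; apply: hL => l; apply: uf_imp => // hg.
    have := proj2 (glam l _) (I2 t (pt l) ht (good_in hg) hg).
    move=> H; apply: (uf_up ufU H) => x [y [h1 [z [h2 h3]]]]; by exists y, z.
  by apply: (uf_up ufU H0) => x Hx t l ht; apply: Hx.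
- have H0 : fU (fun x => forall t, t \in enumT (size h) -> forall a, List.In a F -> forall b, List.In b F -> forall l, good (map snd t) a -> a = op (pt l) b ->
    exists u, lam l x = Some u /\ g b (fun v => exists w, mul u v = Some w /\ T h t a w)).
    apply: uf_mem => // t ht; apply: uf_list => // a ha; apply: uf_list => // b hb.
    apply: hL => l; apply: uf_imp => // hg; apply: uf_imp => // hab.
    have H1 : g (op (pt l) b) (T h t a) by rewrite -hab; exact: I2.
    have := proj1 (gmul _ _ _) H1; rewrite /gamma_mul => H2.
    have := proj2 (glam l _) H2.
    by move=> H; apply: (uf_up ufU H) => x [y [h1 h2]]; exists y.
  by apply: (uf_up ufU H0) => x Hx t a b l ht ha hb; apply: Hx.
Qed.

Lemma tp_old (h : seq X) (x : X) t : t \in enumT (size h) -> tp (rcons h x) t = tp h t.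
Proof.
move=> ht; apply: tp_ext => e he; rewrite nth_rcons (enumT_idx ht he) //.
Qed.

Lemma nth_last (h : seq X) (x : X) : nth x0 (rcons h x) (size h) = x.
Proof. by rewrite nth_rcons ltnn eqxx. Qed.

Lemma mem_step (h : seq X) (x : X) t' : t' \in enumT (size (rcons h x)) ->
  t' \in enumT (size h) \/ exists t l, t \in enumT (size h) /\ t' = rcons t (size h, l).
Proof.
rewrite size_rcons /= mem_cat => /orP [H|/allpairsP [[t l] [/= h1 _ ->]]]; first by left.
by right; exists t, l.
Qed.

Lemma Inv_step (h : seq X) (x : X) : Inv h -> Good h x -> Inv (rcons h x).
Proof.
move=> [I1 [I2 I3]] [_ [GB [GC GD]]].
have tpnew : forall t l u, t \in enumT (size h) -> lam l x = Some u ->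
    tp (rcons h x) (rcons t (size h, l)) = ext (tp h t) u.
  move=> t l u ht hu; rewrite -(tp_old x ht); apply: tp_rcons; last by rewrite nth_last.
  case: t ht => [|e t] ht; [by left|right]; rewrite (tp_old x ht); exact: I1.
split; [|split].
- move=> t' /mem_step [ht|[t [l [ht ->]]]].
    by rewrite (tp_old x ht); apply: I1.
  have [u [hu hne]] := GB t l ht.
  by rewrite (tpnew _ _ _ ht hu).
- move=> t' b /mem_step [ht|[t [l [ht ->]]]] hb hg.
    have := I2 t' b ht hb hg; rewrite /T (tp_old x ht) //.
  rewrite map_rcons in hg.
  have hg' := good_rcons hg; have ha := good_in hg'.
  have [u [hu Hu]] := GD t _ b l ht ha hb hg' erefl.
  have [u' [hu' hne]] := GB t l ht.
  rewrite hu in hu'; case: hu' => <- in hne.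
  case E: (ext (tp h t) u) hne => [s'|] // _.
  apply: (uf_up (proj1 ((proj1 (proj2 hom)) b)) Hu) => v [w [hw [z [hz hc]]]].
  exists z; rewrite (tpnew _ _ _ ht hu) E map_rcons J_rcons; split => //.
  move: E hz; case: (tp h t) => [s|] /=.
    move=> E hz; have := mul_assoc s u v; rewrite E hw hz //.
  by move=> [<-] [<-].
- move=> t0 m l /mem_step [ht|[t [l' [ht E]]]] hg.
    by rewrite (tp_old x ht); apply: I3.
  case: (rcons_inj E) => ht0 hm hl; subst.
  have [u [z [hu [hz hc]]]] := GC t l' ht hg.
  exists z; by rewrite (tpnew _ _ _ ht hu) hz.
Qed.

End Main.

Fixpoint build (X : Type) (pick : seq X -> X) (n : nat) : seq X :=
  match n with 0 => [::] | n'.+1 => rcons (build pick n') (pick (build pick n')) end.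

Lemma size_build (X : Type) (pick : seq X -> X) n : size (build pick n) = n.
Proof. by elim: n => //= n IH; rewrite size_rcons IH. Qed.

Lemma nth_build (X : Type) (pick : seq X -> X) (x0 : X) m i : i < m ->
  nth x0 (build pick m) i = nth x0 (build pick i.+1) i.
Proof.
elim: m => // m IH; rewrite ltnS leq_eqVlt => /orP [/eqP -> //|hi] /=.
by rewrite nth_rcons size_build hi IH.
Qed.

Lemma le_foldr_max (s : seq nat) z : z \in s -> z <= foldr maxn 0 s.
Proof.
elim: s => //= y s IH; rewrite inE => /orP [/eqP ->|/IH h]; first exact: leq_maxl.
exact: leq_trans h (leq_maxr _ _).
Qed.

Lemma aprod_rcons (A Lam : Type) (op : A -> A -> A) (pt : Lam -> A) :
  semigroup_assoc op -> forall q y,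
  aprod op (rcons (map pt q) y) = Some (foldr (fun l acc => op (pt l) acc) y q).
Proof.
move=> hA; elim=> [|l q IH] y //=.
move: (IH y); case: (rcons (map pt q) y) => [|z r] //= [<-].
by rewrite foldl_assoc.
Qed.

Theorem corollary3p4
  (Lam : finType) (Lam_ne : inhabited Lam)
  (A : Type) (op : A -> A -> A) (op_assoc : semigroup_assoc op)
  (pt : Lam -> A)
  (S X : Type) (mul : S -> S -> option S) (mul_assoc : partial_assoc mul)
  (lam : Lam -> X -> option S) (arr : function_array mul lam)
  (fU : (X -> Prop) -> Prop) (g : A -> (S -> Prop) -> Prop)
  (hom : is_hom mul lam op pt fU g) :
  forall (F : list A) (D : X -> Prop), fU D ->
  forall (C : finType) (c : S -> C),
  exists x : nat -> X,
    (forall n, D (x n)) /\ basic mul lam x /\ tame mul lam op pt F c x.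
Proof.
move=> F D HD C c.
have [[ufU _] [gS _]] := hom.
have Hc : forall a, exists i, g a (fun s => c s = i) := fun a => uf_color c (proj1 (gS a)).
pose col a := proj1_sig (constructive_indefinite_description _ (Hc a)).
have Hcol : forall a, g a (fun s => c s = col a).
  by move=> a; rewrite /col; case: (constructive_indefinite_description _ _).
have [x0 _] := uf_ne ufU HD.
pose pick h := epsilon (inhabits x0) (Good op pt mul lam g F D c col x0 h).
have HI : forall n, Inv op pt mul lam g F c col x0 (build pick n) /\
    Good op pt mul lam g F D c col x0 (build pick n) (pick (build pick n)).
  elim=> [|n [IH1 IH2]].
    have I0 := Inv_nil hom F Hcol x0; split => //.
    apply: epsilon_spec; exact: uf_ne ufU (Good_ex hom HD I0).
  have I1 : Inv op pt mul lam g F c col x0 (build pick n.+1) := Inv_step mul_assoc hom IH1 IH2.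
  split => //; apply: epsilon_spec; exact: uf_ne ufU (Good_ex hom HD I1).
pose x i := nth x0 (build pick i.+1) i.
have hx : forall i, x i = pick (build pick i).
  by move=> i; rewrite /x /= nth_rcons size_build ltnn eqxx.
have key : forall t, incr_terms t -> exists N, t \in enumT Lam N /\
    term_prod mul lam x t = tp mul lam x0 (build pick N) t /\ size (build pick N) = N.
  move=> t [_ hs]; exists (foldr maxn 0 (map fst t)).+1.
  have hlt : forall e, e \in t -> e.1 < (foldr maxn 0 (map fst t)).+1.
    by move=> e he; rewrite ltnS; apply: le_foldr_max; apply: map_f.
  split; first exact: enumT_complete.
  split; last exact: size_build.
  rewrite /tp /term_prod; congr lprod; apply/eq_in_map => e he /=.
  by rewrite /x (nth_build _ _ (hlt e he)).
exists x; split; [|split].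
- by move=> n; rewrite hx; case: (HI n) => _ [].
- move=> t ht; have [N [hN [-> hsz]]] := key t ht.
  case: (HI N) => [[I1 _] _]; apply: I1; first by rewrite hsz.
  by case: ht.
- have fin : forall t s, incr_terms t -> suffixes_in op pt F (map snd t) ->
      term_prod mul lam x t = Some s ->
      exists a, aprod op (map pt (map snd t)) = Some a /\ c s = col a.
    move=> t s ht hsuf hp; have [N [hN [htp hsz]]] := key t ht.
    case: (HI N) => [[_ [_ I3]] _].
    case/lastP: t ht hsuf hp hN htp => [[]//|t0 [m l]] ht hsuf hp hN htp.
    rewrite hsz in I3; have hg : good op pt F (map snd t0) (pt l).
      move=> k hk; have := hsuf k; rewrite !map_rcons size_rcons ltnS => /(_ hk).
      rewrite drop_rcons // map_rcons aprod_rcons // => -[a [[<-] ha]] //.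
    have [z [hz hcz]] := I3 t0 m l hN hg.
    exists (J op pt (map snd t0) (pt l)); split.
      by rewrite !map_rcons aprod_rcons.
    by rewrite -htp hp in hz; case: hz => ->.
  move=> t1 t2 s1 s2 ht1 ht2 hs1 hs2 heq hp1 hp2.
  have [a1 [ha1 hc1]] := fin t1 s1 ht1 hs1 hp1.
  have [a2 [ha2 hc2]] := fin t2 s2 ht2 hs2 hp2.
  by rewrite hc1 hc2; rewrite heq ha2 in ha1; case: ha1 => ->.
Qed.
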